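(* Let $k$ be a field and $Q$ the cyclic quiver $\widetilde{\mathbb A}_{\,l}$ (vertices $0,\dots,l$ modulo $l+1$, arrows $i\to i+1$). Let $M,N$ be finite-dimensional nilpotent representations and $X$ an extension of $M$ by $N$, i.e. there is a short exact sequence $0\to N\to X\to M\to 0$. Then $\mu(X)\le\mu(M)\cup\mu(N)$, with equality if and only if $X\cong M\oplus N$.
   Context: For a nilpotent representation $M$, $\mu(M)$ is the partition formed by the Loewy lengths of the indecomposable direct summands of $M$. For partitions $\lambda,\mu$, $\lambda\cup\mu$ is the partition formed by all parts of $\lambda$ and $\mu$ arranged in decreasing order. For partitions $\lambda\ne\mu$ of the same integer, $\lambda<\mu$ means that at the first index $i$ with $\lambda_i\neq\mu_i$ one has $\lambda_i>\mu_i$. *)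

(* Defs.v *)
From HB Require Import structures.
From mathcomp Require Import all_boot all_order all_algebra.
From Stdlib Require List.
Set Implicit Arguments. Unset Strict Implicit. Unset Printing Implicit Defensive.
Import GRing.Theory.
Local Open Scope ring_scope.

(* A finite-dimensional representation of the cyclic quiver with vertices
   'I_(l.+1) (= 0..l modulo l+1) and arrows i -> i+1, given in a basis of
   homogeneous vectors: rdim = total dimension, rgr b = vertex of basis
   vector b, ract = matrix of the sum of all arrow maps, acting on row
   vectors (v |-> v *m ract). *)
Record rep (k : fieldType) (l : nat) := Rep {
  rdim : nat;
  rgr : 'I_rdim -> 'I_l.+1;
  ract : 'M[k]_rdim }.
Arguments rdim {k l}.
Arguments rgr {k l}.
Arguments ract {k l}.

Section Reps.
Variables (k : fieldType) (l : nat).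
Implicit Types R S : rep k l.

Definition is_rep R : Prop :=
  forall i j, ract R i j != 0 -> rgr R j = ordS (rgr R i).

Definition nilpotent_rep R : Prop := exists m : nat, ract R ^+ m = 0.

Definition rhom R S (f : 'M[k]_(rdim R, rdim S)) : Prop :=
  (forall i j, f i j != 0 -> rgr S j = rgr R i) /\ ract R *m f = f *m ract S.

Definition riso R S : Prop :=
  exists (f : 'M[k]_(rdim R, rdim S)) (g : 'M[k]_(rdim S, rdim R)),
    [/\ rhom f, rhom g, f *m g = 1%:M & g *m f = 1%:M].

Definition zero_rep : rep k l := @Rep k l 0 (fun i => ord0) 0.

Definition dsum R S : rep k l :=
  @Rep k l (rdim R + rdim S)
    (fun i => match split i with inl a => rgr R a | inr b => rgr S b end)
    (block_mx (ract R) 0 0 (ract S)).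

Definition bigdsum (rs : seq (rep k l)) : rep k l := foldr dsum zero_rep rs.

Definition indecomposable R : Prop :=
  is_rep R /\ (0 < rdim R)%N /\
  forall A B, is_rep A -> is_rep B -> riso R (dsum A B) ->
    rdim A = 0 \/ rdim B = 0.

(* Loewy length of a nilpotent representation: the radical is the image of
   the arrows, so rad^m R = 0 iff ract R ^+ m = 0; the Loewy length is the
   least such m (which is <= rdim R). *)
Definition loewy R : nat :=
  find (fun m => ract R ^+ m == 0) (iota 0 (rdim R).+1).

(* mu_of R p : p is the partition formed by the Loewy lengths of the
   indecomposable summands in some decomposition of R into indecomposables
   (well defined by Krull-Schmidt). *)
Definition mu_of R (p : seq nat) : Prop :=
  exists rs : seq (rep k l),
    [/\ forall r, List.In r rs -> indecomposable r,
        riso R (bigdsum rs) &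
        p = sort geq (map loewy rs)].

Definition ses N X M : Prop :=
  exists (i : 'M[k]_(rdim N, rdim X)) (p : 'M[k]_(rdim X, rdim M)),
    [/\ rhom i, rhom p, row_free i, row_full p & (i == kermx p)%MS].

End Reps.

Arguments zero_rep {k l}.

(* partitions as weakly decreasing lists of positive integers *)
Definition part_union (p q : seq nat) : seq nat := sort geq (p ++ q).

Definition part_lt (p q : seq nat) : Prop :=
  p <> q /\ exists i : nat,
    (forall j, (j < i)%N -> nth 0%N p j = nth 0%N q j) /\ (nth 0%N q i < nth 0%N p i)%N.

Definition part_le (p q : seq nat) : Prop := p = q \/ part_lt p q.

(* Main.v *)
Require Import Defs.
From HB Require Import structures.
From mathcomp Require Import all_boot all_order all_algebra.
Set Implicit Arguments. Unset Strict Implicit. Unset Printing Implicit Defensive.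
Import GRing.Theory.

Local Open Scope ring_scope.

Section Grading.
Variables (k : fieldType) (l : nat).
Local Notation V := 'I_l.+1.

Definition grok m n (g1 : 'I_m -> V) (g2 : 'I_n -> V) (sh : V -> V)
  (Y : 'M[k]_(m, n)) := forall i j, Y i j != 0 -> g2 j = sh (g1 i).

Definition Prp n (P : pred V) (g : 'I_n -> V) : 'M[k]_n :=
  diag_mx (\row_i (P (g i))%:R).

Lemma mulmx_nz m n p (Y : 'M[k]_(m, n)) (Z : 'M[k]_(n, p)) i j :
  (Y *m Z) i j != 0 -> exists t, Y i t != 0 /\ Z t j != 0.
Proof.
move=> nz.
have: [exists t, (Y i t != 0) && (Z t j != 0)].
  apply: contraNT nz => /existsPn H; rewrite mxE big1 // => t _.
  by have := H t; rewrite negb_and !negbK => /orP[/eqP->|/eqP->]; rewrite ?mul0r ?mulr0.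
by case/existsP => t /andP[]; exists t.
Qed.

Lemma grok_mul m n p g1 g2 g3 s1 s2 (Y : 'M[k]_(m, n)) (Z : 'M[k]_(n, p)) :
  grok g1 g2 s1 Y -> grok g2 g3 s2 Z -> grok g1 g3 (s2 \o s1) (Y *m Z).
Proof.
move=> HY HZ i j /mulmx_nz [t [nY nZ]].
by rewrite (HZ _ _ nZ) (HY _ _ nY).
Qed.

Lemma grok_ext m n g1 g2 s1 s2 (Y : 'M[k]_(m, n)) :
  s1 =1 s2 -> grok g1 g2 s1 Y -> grok g1 g2 s2 Y.
Proof. by move=> e H i j /H ->. Qed.

Lemma grok_add m n g1 g2 s (Y Z : 'M[k]_(m, n)) :
  grok g1 g2 s Y -> grok g1 g2 s Z -> grok g1 g2 s (Y + Z).
Proof.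
move=> HY HZ i j; rewrite mxE; case: (eqVneq (Y i j) 0) => [->|/HY//].
by rewrite add0r => /HZ.
Qed.

Lemma grok_opp m n g1 g2 s (Y : 'M[k]_(m, n)) :
  grok g1 g2 s Y -> grok g1 g2 s (- Y).
Proof. by move=> HY i j; rewrite mxE oppr_eq0 => /HY. Qed.

Lemma grok0 m n g1 g2 s : grok g1 g2 s (0 : 'M[k]_(m, n)).
Proof. by move=> i j; rewrite mxE eqxx. Qed.

Lemma grok1 n g : grok g g id (1%:M : 'M[k]_n).
Proof. move=> i j; rewrite mxE; have [->//|_] := eqVneq i j; by rewrite eqxx. Qed.

Lemma Prp_mull n m P g (Y : 'M[k]_(n, m)) i j :
  (Prp P g *m Y) i j = (P (g i))%:R * Y i j.
Proof. by rewrite mul_diag_mx !mxE. Qed.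

Lemma Prp_mulr n m P g (Y : 'M[k]_(n, m)) i j :
  (Y *m Prp P g) i j = Y i j * (P (g j))%:R.
Proof. by rewrite mul_mx_diag !mxE. Qed.

Lemma grok_Prp m n g1 g2 sh (Y : 'M[k]_(m, n)) (P1 P2 : pred V) :
  grok g1 g2 sh Y -> (forall d, P1 d = P2 (sh d)) ->
  Prp P1 g1 *m Y = Y *m Prp P2 g2.
Proof.
move=> HY HP; apply/matrixP => i j; rewrite Prp_mull Prp_mulr.
case: (eqVneq (Y i j) 0) => [->|/HY ->]; first by rewrite mulr0 mul0r.
by rewrite -HP mulrC.
Qed.

Lemma Prp_grok m n g1 g2 sh (Y : 'M[k]_(m, n)) :
  (forall d, Prp (pred1 d) g1 *m Y = Y *m Prp (pred1 (sh d)) g2) ->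
  grok g1 g2 sh Y.
Proof.
move=> H i j nz; have := congr1 (fun M : 'M[k]_(m, n) => M i j) (H (g1 i)).
rewrite Prp_mull Prp_mulr /= eqxx mul1r.
case: eqP => // _; rewrite mulr0 => e; by rewrite e eqxx in nz.
Qed.

Lemma grok_inv m n g1 g2 (Y : 'M[k]_(m, n)) (Z : 'M[k]_(n, m)) :
  grok g1 g2 id Y -> Y *m Z = 1%:M -> Z *m Y = 1%:M -> grok g2 g1 id Z.
Proof.
move=> HY YZ ZY; apply: Prp_grok => d /=.
have E := grok_Prp (P1 := pred1 d) (P2 := pred1 d) HY (fun _ => erefl).
rewrite -[Prp _ g2 *m Z]mul1mx -ZY -!mulmxA (mulmxA Y) -E.
by rewrite -!mulmxA YZ mulmx1.
Qed.

Lemma grok_coord r m n h g g1 sh (B : 'M[k]_(r, n)) (Y : 'M[k]_(m, n)) :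
  injective sh -> row_free B -> grok h g id B -> grok g1 g sh Y ->
  (Y <= B)%MS -> grok g1 h sh (Y *m pinvmx B).
Proof.
move=> ish fB HB HY YB; apply: Prp_grok => d.
have YK := mulmxKpV YB; move: (pinvmx B) YK => Q YK.
have E : Prp (pred1 d) g1 *m (Y *m Q) *m B = Y *m Q *m Prp (pred1 (sh d)) h *m B.
  rewrite -!mulmxA (grok_Prp (P1 := pred1 (sh d)) (P2 := pred1 (sh d)) HB) //.
  rewrite !mulmxA (YK : _ = _) -[LHS]mulmxA -[LHS]mulmxA (mulmxA Y) (YK : _ = _).
  apply: grok_Prp HY _ => e /=.
  by rewrite (inj_eq ish).
exact: (row_free_inj fB E).
Qed.

End Grading.
Arguments Prp {k l n}.
Arguments grok {k l m n}.


Section RepTheory.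
Variables (k : fieldType) (l : nat).
Local Notation V := 'I_l.+1.
Implicit Types R S T : rep k l.

Lemma rhom_grok R S (f : 'M[k]_(rdim R, rdim S)) :
  rhom f -> grok (rgr R) (rgr S) id f.
Proof. by case. Qed.

Lemma grok_rhom R S (f : 'M[k]_(rdim R, rdim S)) :
  grok (rgr R) (rgr S) id f -> ract R *m f = f *m ract S -> rhom f.
Proof. by split. Qed.

Lemma rep_grok R : is_rep R -> grok (rgr R) (rgr R) (@ordS l.+1) (ract R).
Proof. by []. Qed.

Lemma rep_pow R m : is_rep R ->
  grok (rgr R) (rgr R) (iter m (@ordS l.+1)) (ract R ^+ m).
Proof.
move=> /rep_grok HR; elim: m => [|m IH]; first by rewrite expr0; exact: grok1.
rewrite exprS -mulmxE; apply: grok_ext (grok_mul HR IH) => x /=; rewrite -iterS.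
by rewrite iterSr.
Qed.

Lemma comm_pow m n (A : 'M[k]_m) (B : 'M[k]_n) (f : 'M[k]_(m, n)) e :
  A *m f = f *m B -> A ^+ e *m f = f *m B ^+ e.
Proof.
move=> H; elim: e => [|e IH]; first by rewrite !expr0 mul1mx mulmx1.
by rewrite !exprS -!mulmxE -mulmxA IH !mulmxA H.
Qed.

Lemma comm_powr m n (A : 'M[k]_m) (B : 'M[k]_n) (f : 'M[k]_(m, n)) e :
  A *m f = f *m B -> A ^+ e *m f = f *m B ^+ e.
Proof. exact: comm_pow. Qed.

Lemma rhom1 R : rhom (1%:M : 'M[k]_(rdim R, rdim R)).
Proof. by split; [exact: (@grok1 k l _ (rgr R)) | rewrite mulmx1 mul1mx]. Qed.

Lemma rhom_comp R S T (f : 'M[k]_(rdim R, rdim S)) (g : 'M[k]_(rdim S, rdim T)) :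
  rhom f -> rhom g -> rhom (f *m g).
Proof.
move=> [Gf Cf] [Gg Cg]; split.
  change (grok (rgr R) (rgr T) id (f *m g)).
  by apply: (grok_ext _ (grok_mul (Gf : grok (rgr R) (rgr S) id f) (Gg : grok (rgr S) (rgr T) id g))).
by rewrite mulmxA Cf -mulmxA Cg mulmxA.
Qed.

Lemma rhom_inv R S (f : 'M[k]_(rdim R, rdim S)) (g : 'M[k]_(rdim S, rdim R)) :
  rhom f -> f *m g = 1%:M -> g *m f = 1%:M -> rhom g.
Proof.
move=> [Gf Cf] fg gf; split.
  change (grok (rgr S) (rgr R) id g); exact: (grok_inv (Gf : grok (rgr R) (rgr S) id f) fg gf).
rewrite -[ract S *m g]mul1mx -gf -!mulmxA (mulmxA f) -Cf.
by rewrite -!mulmxA fg mulmx1.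
Qed.

Lemma riso_refl R : riso R R.
Proof. by exists 1%:M, 1%:M; split; rewrite ?mulmx1 //; apply: rhom1. Qed.

Lemma riso_sym R S : riso R S -> riso S R.
Proof. by case=> f [g [hf hg fg gf]]; exists g, f; split. Qed.

Lemma riso_trans R S T : riso R S -> riso S T -> riso R T.
Proof.
case=> f [g [hf hg fg gf]] [f' [g' [hf' hg' fg' gf']]].
exists (f *m f'), (g' *m g); split; try exact: rhom_comp.
  by rewrite -mulmxA (mulmxA f') fg' mul1mx fg.
by rewrite -mulmxA (mulmxA g) gf mul1mx gf'.
Qed.

Lemma rhom_Prp R S (f : 'M[k]_(rdim R, rdim S)) P :
  rhom f -> Prp P (rgr R) *m f = f *m Prp P (rgr S).
Proof. by move=> /rhom_grok Gf; apply: (grok_Prp (P1 := P) (P2 := P) Gf). Qed.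

Definition grk R (P : pred V) m := \rank (Prp P (rgr R) *m ract R ^+ m).

Lemma riso_grk_le R S P m : riso R S -> (grk R P m <= grk S P m)%N.
Proof.
case=> f [g [hf hg fg gf]]; rewrite /grk.
have -> : Prp P (rgr R) *m ract R ^+ m =
          f *m (Prp P (rgr S) *m ract S ^+ m) *m g.
  rewrite -[LHS]mulmx1 -fg !mulmxA -(mulmxA _ _ f).
  rewrite (comm_pow _ hf.2) mulmxA (rhom_Prp P hf) -!mulmxA.
  done.
by rewrite (leq_trans (mxrankM_maxl _ _)) // mxrankM_maxr.
Qed.

Lemma riso_grk R S P m : riso R S -> grk R P m = grk S P m.
Proof.
move=> H; apply/eqP; rewrite eqn_leq !riso_grk_le //; exact: riso_sym.
Qed.

End RepTheory.
Arguments grk {k l}.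


Section DsumTheory.
Variables (k : fieldType) (l : nat).
Local Notation V := 'I_l.+1.
Implicit Types R S T : rep k l.

Lemma split_lsh m n (a : 'I_m) : split (lshift n a) = inl a.
Proof. exact: (unsplitK (inl a)). Qed.
Lemma split_rsh m n (a : 'I_n) : split (rshift m a) = inr a.
Proof. exact: (unsplitK (inr a)). Qed.

Definition dsg m n (g1 : 'I_m -> V) (g2 : 'I_n -> V) (i : 'I_(m + n)) : V :=
  match split i with inl a => g1 a | inr b => g2 b end.

Lemma grok_block m1 m2 n1 n2 g1 g2 h1 h2 s
  (Y1 : 'M[k]_(m1, n1)) (Y2 : 'M[k]_(m2, n2)) :
  grok g1 h1 s Y1 -> grok g2 h2 s Y2 ->
  grok (dsg g1 g2) (dsg h1 h2) s (block_mx Y1 0 0 Y2).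
Proof.
move=> H1 H2 i j; rewrite /dsg.
case: (split_ordP i) => a ->; case: (split_ordP j) => b ->;
  rewrite ?block_mxEul ?block_mxEur ?block_mxEdl ?block_mxEdr ?mxE ?eqxx //.
- exact: H1.
- exact: H2.
Qed.

Lemma Prp_dsg m n P (g1 : 'I_m -> V) (g2 : 'I_n -> V) :
  Prp P (dsg g1 g2) = block_mx (Prp P g1) 0 0 (Prp P g2) :> 'M[k]_(m + n).
Proof.
apply/matrixP => i j; rewrite /Prp /dsg.
case: (split_ordP i) => a ->; case: (split_ordP j) => b ->;
  rewrite ?block_mxEul ?block_mxEur ?block_mxEdl ?block_mxEdr !mxE ?eq_shift ?split_lsh ?split_rsh //.
Qed.

Lemma ract_dsum_pow R S m :
  ract (dsum R S) ^+ m = block_mx (ract R ^+ m) 0 0 (ract S ^+ m).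
Proof.
elim: m => [|m IH]; first by rewrite !expr0 -scalar_mx_block.
rewrite !exprS IH -!mulmxE /= mulmx_block.
by rewrite !mulmx0 !mul0mx !addr0 !add0r.
Qed.

Lemma grk_dsum R S P m : grk (dsum R S) P m = (grk R P m + grk S P m)%N.
Proof.
rewrite /grk ract_dsum_pow.
have -> : rgr (dsum R S) = dsg (rgr R) (rgr S) by [].
rewrite Prp_dsg mulmx_block !mulmx0 !mul0mx !addr0 !add0r.
exact: rank_diag_block_mx.
Qed.

Lemma is_rep_dsum R S : is_rep R -> is_rep S -> is_rep (dsum R S).
Proof. move=> HR HS; exact: (grok_block HR HS). Qed.

Lemma riso_dsum R R' S S' : riso R R' -> riso S S' -> riso (dsum R S) (dsum R' S').
Proof.
case=> f [g [hf hg fg gf]] [f' [g' [hf' hg' fg' gf']]].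
exists (block_mx f 0 0 f'), (block_mx g 0 0 g'); split.
- split; first exact: (grok_block (rhom_grok hf) (rhom_grok hf')).
  rewrite /= !mulmx_block !mulmx0 !mul0mx !addr0 !add0r.
  by rewrite hf.2 hf'.2.
- split; first exact: (grok_block (rhom_grok hg) (rhom_grok hg')).
  rewrite /= !mulmx_block !mulmx0 !mul0mx !addr0 !add0r.
  by rewrite hg.2 hg'.2.
- by rewrite mulmx_block !mulmx0 !mul0mx !addr0 !add0r fg fg' -scalar_mx_block.
- by rewrite mulmx_block !mulmx0 !mul0mx !addr0 !add0r gf gf' -scalar_mx_block.
Qed.

Lemma riso_bij R S (sg : 'I_(rdim R) -> 'I_(rdim S)) (tu : 'I_(rdim S) -> 'I_(rdim R)) :
  cancel sg tu -> cancel tu sg ->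
  (forall i, rgr S (sg i) = rgr R i) ->
  (forall i j, ract S (sg i) (sg j) = ract R i j) -> riso R S.
Proof.
move=> st ts Hg Ha.
have Hg' : forall i, rgr R (tu i) = rgr S i by move=> i; rewrite -Hg ts.
have E1 : rowsub sg (1%:M : 'M[k]_(rdim S)) = colsub tu 1%:M.
  apply/matrixP => i j; rewrite !mxE.
  by apply/congr1/congr1; apply/eqP/eqP => [<-|->]; rewrite ?st ?ts.
exists (rowsub sg 1%:M), (rowsub tu 1%:M); split.
- split.
    move=> i j; rewrite !mxE; have [<- _|_] := eqVneq (sg i) j; [exact: Hg | by rewrite eqxx].
  rewrite mul_rowsub_mx mul1mx E1 mulmx_colsub mulmx1.
  apply/matrixP => i j; rewrite !mxE -Ha ts //.
- split.
    move=> i j; rewrite !mxE; have [<- _|_] := eqVneq (tu i) j; [exact: Hg' | by rewrite eqxx].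
  have E2 : rowsub tu (1%:M : 'M[k]_(rdim R)) = colsub sg 1%:M.
    apply/matrixP => i j; rewrite !mxE.
    by apply/congr1/congr1; apply/eqP/eqP => [<-|->]; rewrite ?st ?ts.
  rewrite mul_rowsub_mx mul1mx E2 mulmx_colsub mulmx1.
  apply/matrixP => i j; rewrite !mxE -Ha ts //.
- rewrite mul_rowsub_mx mul1mx; apply/matrixP => i j; rewrite !mxE st //.
- rewrite mul_rowsub_mx mul1mx; apply/matrixP => i j; rewrite !mxE ts //.
Qed.


Ltac bsimp := rewrite /= ?(split_lsh, split_rsh, block_mxEul, block_mxEur,
  block_mxEdl, block_mxEdr, mxE).

Lemma riso_comm R S : riso (dsum R S) (dsum S R).
Proof.
pose sg (i : 'I_(rdim R + rdim S)) : 'I_(rdim S + rdim R) :=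
  match split i with inl a => rshift _ a | inr b => lshift _ b end.
pose tu (i : 'I_(rdim S + rdim R)) : 'I_(rdim R + rdim S) :=
  match split i with inl a => rshift _ a | inr b => lshift _ b end.
apply: (@riso_bij (dsum R S) (dsum S R) sg tu).
- by move=> i; rewrite /sg /tu; case: (split_ordP i) => a ->; bsimp.
- by move=> i; rewrite /sg /tu; case: (split_ordP i) => a ->; bsimp.
- by move=> i; rewrite /sg; case: (split_ordP i) => a ->; bsimp.
- move=> i j; rewrite /sg; case: (split_ordP i) => a ->;
    case: (split_ordP j) => b ->; bsimp => //.
Qed.

Lemma riso_assoc R S T : riso (dsum (dsum R S) T) (dsum R (dsum S T)).
Proof.
pose sg (i : 'I_((rdim R + rdim S) + rdim T)) : 'I_(rdim R + (rdim S + rdim T)) :=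
  match split i with
  | inl x => match split x with inl y => lshift _ y | inr z => rshift _ (lshift _ z) end
  | inr w => rshift _ (rshift _ w) end.
pose tu (i : 'I_(rdim R + (rdim S + rdim T))) : 'I_((rdim R + rdim S) + rdim T) :=
  match split i with
  | inl y => lshift _ (lshift _ y)
  | inr x => match split x with inl z => lshift _ (rshift _ z) | inr w => rshift _ w end
  end.
apply: (@riso_bij (dsum (dsum R S) T) (dsum R (dsum S T)) sg tu).
- move=> i; rewrite /sg /tu; case: (split_ordP i) => a ->; last by bsimp.
  by case: (split_ordP a) => b ->; bsimp.
- move=> i; rewrite /sg /tu; case: (split_ordP i) => a ->; first by bsimp.
  by case: (split_ordP a) => b ->; bsimp.
- move=> i; rewrite /sg; case: (split_ordP i) => a ->; last by bsimp.
  by case: (split_ordP a) => b ->; bsimp.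
- move=> i j; rewrite /sg; case: (split_ordP i) => a ->;
    case: (split_ordP j) => b ->.
  + by case: (split_ordP a) => c ->; case: (split_ordP b) => d ->; bsimp.
  + by case: (split_ordP a) => c ->; bsimp.
  + by case: (split_ordP b) => d ->; bsimp.
  + by bsimp.
Qed.

Lemma riso_zerol R : riso (dsum zero_rep R) R.
Proof.
have E : forall i : 'I_(rdim R), rshift 0 i = i :> 'I_(0 + rdim R).
  by move=> i; apply: val_inj.
apply: (@riso_bij (dsum zero_rep R) R (fun i : 'I_(0 + rdim R) => i : 'I_(rdim R))
                      (fun i : 'I_(rdim R) => i : 'I_(0 + rdim R))) => //.
- move=> i; case: (split_ordP i) => [[]//|] a ->; bsimp; by rewrite E.
- move=> i j; case: (split_ordP i) => [[]//|] a ->;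
  case: (split_ordP j) => [[]//|] b ->; bsimp; by rewrite !E.
Qed.

Lemma riso_swap3 R S T : riso (dsum R (dsum S T)) (dsum S (dsum R T)).
Proof.
apply: riso_trans (riso_sym (riso_assoc _ _ _)) _.
apply: riso_trans (riso_assoc _ _ _).
apply: riso_dsum (riso_refl _); exact: riso_comm.
Qed.

Lemma bigdsum_cat (rs ts : seq (rep k l)) :
  riso (bigdsum (rs ++ ts)) (dsum (bigdsum rs) (bigdsum ts)).
Proof.
elim: rs => [|r rs IH] /=; first exact: riso_sym (riso_zerol _).
apply: riso_trans (riso_sym (riso_assoc _ _ _)).
exact: riso_dsum (riso_refl _) IH.
Qed.

Lemma bigdsum_perm (T : eqType) (F : T -> rep k l) (s t : seq T) :
  perm_eq s t -> riso (bigdsum (map F s)) (bigdsum (map F t)).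
Proof.
elim: s t => [|x s IH] t.
  by rewrite perm_sym => /perm_nilP ->; exact: riso_refl.
move=> pst; have xt : x \in t by rewrite -(perm_mem pst) mem_head.
move: pst; case/splitPr: xt => t1 t2 pst.
have pst' : perm_eq s (t1 ++ t2).
  by rewrite -(perm_cons x); apply: (perm_trans pst); rewrite -cat1s perm_catCA.
rewrite map_cons; apply: riso_sym.
rewrite map_cat map_cons; apply: riso_trans (bigdsum_cat _ _) _.
apply: riso_trans (riso_swap3 _ _ _) _.
apply: riso_dsum (riso_refl _) _.
apply: riso_trans (riso_sym (bigdsum_cat _ _)) _.
rewrite -map_cat; apply: riso_sym; exact: IH.
Qed.

End DsumTheory.


Section Strings.
Variables (k : fieldType) (l : nat).
Local Notation V := 'I_l.+1.
Implicit Types R S T : rep k l.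

Lemma sum_delta n (a : nat) (F : 'I_n -> k) :
  \sum_(t < n) ((a == t :> nat)%:R * F t) =
  if insub a is Some t then F t else 0.
Proof.
case: insubP => [t lt_an vt|nlt].
  rewrite (bigD1 t) //= -vt eqxx mul1r big1 ?addr0 // => t' ne.
  by move: ne; rewrite eq_sym -val_eqE => /negbTE ->; rewrite mul0r.
rewrite big1 // => t _; rewrite (_ : (a == t) = false) ?mul0r //.
by apply/negbTE; apply: contra nlt => /eqP ->.
Qed.

Definition Sh n : 'M[k]_n := \matrix_(i, j) ((i.+1 == j :> nat)%:R).

Lemma Sh_pow n m : Sh n ^+ m = \matrix_(i, j) (((i + m)%N == j :> nat)%:R).
Proof.
elim: m => [|m IH].
  by rewrite expr0; apply/matrixP => i j; rewrite !mxE addn0.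
rewrite exprS -mulmxE IH; apply/matrixP => i j; rewrite !mxE.
under eq_bigr do rewrite !mxE.
rewrite sum_delta; case: insubP => [t _ vt|nlt] /=; first by rewrite (_ : nat_of_ord t = i.+1) // addSnnS.
have H : (j < i.+1 + m)%N.
  by rewrite (leq_trans (ltn_ord j)) // (leq_trans _ (leq_addr _ _)) // leqNgt.
rewrite -addSnnS; case: eqP => // e; by rewrite e ltnn in H.
Qed.

Lemma rank_diag01 n (e : nat -> bool) :
  \rank (diag_mx (\row_(i < n) (e i)%:R) : 'M[k]_n) = count e (iota 0 n).
Proof.
elim: n e => [|n IH] e; first by apply/eqP; rewrite -leqn0 rank_leq_row.
have -> : (diag_mx (\row_(i < n.+1) (e i)%:R) : 'M[k]_n.+1) =
          block_mx (diag_mx (\row_(i < 1) (e i)%:R)) 0 0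
                   (diag_mx (\row_(i < n) (e i.+1)%:R)) :> 'M[k]_(1 + n).
  rewrite -diag_mx_row; congr diag_mx.
  by apply/matrixP => a b; rewrite !mxE; case: split_ordP => c ->; rewrite !mxE.
rewrite (rank_diag_block_mx (m := 1) (n := 1) (p := n) (q := n)) (IH (fun i => e i.+1)) /=.
have -> : iota 1 n = map S (iota 0 n) by rewrite -(iotaDl 1 0 n).
rewrite count_map.
congr (_ + _)%N.
rewrite rank_rV; congr (nat_of_bool _).
case E: (e 0%N).
  apply/eqP => /matrixP /(_ 0 0); rewrite !mxE /= E => /eqP; by rewrite oner_eq0.
apply/eqP/matrixP => a b; rewrite !mxE !ord1 /= E; by rewrite mul0rn.
Qed.

Definition vt (v0 : V) (j : nat) : V := iter j (@ordS l.+1) v0.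

Definition str (v0 : V) (n : nat) : rep k l :=
  @Rep k l n (fun j : 'I_n => vt v0 j) (Sh n).

Lemma str_rep v0 n : is_rep (str v0 n).
Proof.
move=> i j; rewrite /= mxE; case: (eqVneq (i.+1) j) => [e _|_]; last by rewrite eqxx.
by rewrite /vt -e.
Qed.

Lemma count_cut (a : pred nat) n m :
  count (fun i => a i && (i + m < n)%N) (iota 0 n) = count a (iota 0 (n - m)).
Proof.
case: (leqP m n) => [le|lt].
  rewrite -[X in iota 0 X](subnK le) iotaD count_cat !add0n.
  rewrite (@eq_in_count _ _ a (iota 0 (n - m))); last first.
    by move=> i; rewrite mem_iota add0n => /andP[_ lt]; rewrite addnC -ltn_subRL lt andbT.
  rewrite (@eq_in_count _ _ pred0 (iota (n - m) m)); first by rewrite count_pred0 addn0.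
  by move=> i; rewrite mem_iota => /andP[le' _]; rewrite /= addnC -ltn_subRL ltnNge le' andbF.
rewrite (_ : n - m = 0)%N; last by apply/eqP; rewrite subn_eq0 ltnW.
rewrite /= (@eq_in_count _ _ pred0) ?count_pred0 //.
move=> i; rewrite mem_iota => /andP[_ lti] /=.
by rewrite ltnNge (leq_trans (ltnW lt)) ?andbF // leq_addl.
Qed.

Lemma grk_str v0 n P m :
  grk (str v0 n) P m = count (fun j => P (vt v0 j)) (iota 0 (n - m)).
Proof.
rewrite /grk /= Sh_pow.
set Y := _ *m _.
pose e := fun i : nat => P (vt v0 i) && (i + m < n)%N.
pose D : 'M[k]_n := diag_mx (\row_(i < n) (e i)%:R).
pose Z : 'M[k]_n := \matrix_(i, j) (((i + m)%N == j :> nat)%:R).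
have E1 : Y = D *m Z.
  apply/matrixP => i j; rewrite /Y Prp_mull mul_diag_mx !mxE /e.
  case: eqP => [ij|]; last by rewrite !mulr0.
  by rewrite ij ltn_ord andbT.
have E2 : D = Y *m Z^T.
  apply/matrixP => i j.
  rewrite [in RHS]mxE; under eq_bigr do rewrite /Y Prp_mull !mxE -mulrA.
  rewrite -mulr_sumr sum_delta !mxE /e.
  case: insubP => [t lt vt|nlt] /=.
    rewrite lt andbT (_ : nat_of_ord t = (i + m)%N) // eqn_add2r mulr_natr.
    by congr (_ *+ _); rewrite eq_sym.
  by rewrite (negbTE nlt) andbF mulr0 mul0rn.
rewrite -count_cut -[count _ _]/(count e (iota 0 n)) -(rank_diag01 n e) -/D.
apply/eqP; rewrite eqn_leq {1}E1 mxrankM_maxl /= E2 mxrankM_maxl //.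
Qed.

End Strings.
Arguments str {k l}.
Arguments Sh {k}.


Section Nilp.
Variables (k : fieldType) (l : nat).
Local Notation V := 'I_l.+1.
Implicit Types R S T : rep k l.

Lemma pow_subS n (A : 'M[k]_n) m : (A ^+ m.+1 <= A ^+ m)%MS.
Proof. by rewrite exprS -mulmxE submxMl. Qed.

Lemma nilp_size n (A : 'M[k]_n) e : A ^+ e = 0 -> A ^+ n = 0.
Proof.
move=> Ae.
have key : forall m, A ^+ m = 0 \/ (\rank (A ^+ m) + m <= n)%N.
  elim=> [|m [IH|IH]]; first by right; rewrite expr0 addn0 mxrank1.
    by left; rewrite exprS IH mulr0.
  have [->|nz] := eqVneq (A ^+ m.+1) 0; first by left.
  right; have le := mxrankS (pow_subS A m).
  case: (ltnP (\rank (A ^+ m.+1)) (\rank (A ^+ m))) => [lt|ge].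
    by rewrite addnS (leq_trans _ IH) // ltn_add2r.
  exfalso; move: nz; apply/negP; rewrite negbK.
  have sub : (A ^+ m <= A ^+ m.+1)%MS.
    have := mxrank_leqif_eq (pow_subS A m).
    move=> /leqifP; case: ifP => [/eqmxP E _|_ lt]; first by rewrite E.
    by rewrite ltnNge ge in lt.
  have all : forall j, (A ^+ m <= A ^+ (m + j))%MS.
    elim=> [|j IHj]; first by rewrite addn0.
    have H1 := submxMr A IHj; rewrite !mulmxE -!exprSr in H1.
    by rewrite addnS (submx_trans sub).
  have := all e; rewrite exprD Ae mulr0 submx0 => /eqP Am.
  by rewrite exprS Am mulr0.
case: (key n) => [//|]; rewrite -[X in (_ <= X)%N]add0n leq_add2r leqn0 mxrank_eq0.
by move/eqP.
Qed.


Lemma loewy_spec R : nilpotent_rep R ->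
  [/\ ract R ^+ loewy R = 0, (loewy R <= rdim R)%N &
      forall m, (m < loewy R)%N -> ract R ^+ m != 0].
Proof.
case=> e He; have Hn := nilp_size He.
set p := fun m => ract R ^+ m == 0.
have hp : has p (iota 0 (rdim R).+1).
  by apply/hasP; exists (rdim R); rewrite ?mem_iota //= /p Hn.
have lt : (loewy R < (rdim R).+1)%N by move: (hp); rewrite has_find size_iota.
split => //.
- have := nth_find 0%N hp; rewrite /p nth_iota //= => /eqP; by rewrite add0n.
- move=> m lm; have := before_find 0%N lm; rewrite /p nth_iota ?add0n => [->//|].
  exact: ltn_trans lm lt.
Qed.

Lemma nilp_riso R S : riso R S -> nilpotent_rep R -> nilpotent_rep S.
Proof.
case=> f [g [hf hg fg gf]] [e He]; exists e.
by rewrite -[LHS]mul1mx -gf -mulmxA -(comm_pow _ hf.2) He mul0mx mulmx0.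
Qed.

Lemma nilp_dsum R S : nilpotent_rep (dsum R S) -> nilpotent_rep R /\ nilpotent_rep S.
Proof.
case=> e; rewrite ract_dsum_pow => /eqP; rewrite -(@block_mx0 _ _ _ _ _) => /eqP E.
split; exists e.
  by have := congr1 ulsubmx E; rewrite !block_mxKul.
by have := congr1 drsubmx E; rewrite !block_mxKdr.
Qed.

Lemma nilp_bigdsum (rs : seq (rep k l)) :
  nilpotent_rep (bigdsum rs) -> forall r, List.In r rs -> nilpotent_rep r.
Proof.
elim: rs => [|r0 rs IH] //= /nilp_dsum [H0 H] r [<-//|]; exact: IH.
Qed.

End Nilp.


From mathcomp Require Import zify.


Section Core.
Variables (k : fieldType) (l : nat).
Local Notation V := 'I_l.+1.
Implicit Types R S T : rep k l.

Lemma grok_row m n1 n2 (g : 'I_m -> V) (h1 : 'I_n1 -> V) (h2 : 'I_n2 -> V) s (Y1 : 'M[k]_(m, n1)) (Y2 : 'M[k]_(m, n2)) :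
  grok g h1 s Y1 -> grok g h2 s Y2 -> grok g (dsg h1 h2) s (row_mx Y1 Y2).
Proof.
move=> H1 H2 i j; rewrite /dsg; case: (split_ordP j) => b ->;
  rewrite ?row_mxEl ?row_mxEr ?split_lsh ?split_rsh; [exact: H1 | exact: H2].
Qed.

Lemma grok_col m1 m2 n (g1 : 'I_m1 -> V) (g2 : 'I_m2 -> V) (h : 'I_n -> V) s (Y1 : 'M[k]_(m1, n)) (Y2 : 'M[k]_(m2, n)) :
  grok g1 h s Y1 -> grok g2 h s Y2 -> grok (dsg g1 g2) h s (col_mx Y1 Y2).
Proof.
move=> H1 H2 i j; rewrite /dsg; case: (split_ordP i) => b ->;
  rewrite ?col_mxEu ?col_mxEd ?split_lsh ?split_rsh; [exact: H1 | exact: H2].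
Qed.

Lemma sum_delta2 n b (F : 'I_n -> k) :
  \sum_(t < n) (F t * (t.+1 == b :> nat)%:R) =
  if b is b'.+1 then (if insub b' is Some t then F t else 0) else 0.
Proof.
case: b => [|b].
  by rewrite big1 // => t _; rewrite mulr0.
under eq_bigr do rewrite eqSS eq_sym mulrC.
exact: sum_delta.
Qed.

Lemma iter_ordS_inj m : injective (iter m (@ordS l.+1)).
Proof.
elim: m => [|m IH] x y //=.
by move/ordS_inj/IH.
Qed.

Lemma loewy_pos R : nilpotent_rep R -> (0 < rdim R)%N -> (0 < loewy R)%N.
Proof.
move=> nR npos; have [AL _ _] := loewy_spec nR.
rewrite lt0n; apply/eqP => L0; move: AL; rewrite L0 expr0.
move/matrixP => /(_ (Ordinal npos) (Ordinal npos)); rewrite !mxE eqxx /=.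
by move/eqP; rewrite oner_eq0.
Qed.

Lemma indec_str R : nilpotent_rep R -> indecomposable R ->
  exists v0, riso R (str v0 (loewy R)).
Proof.
move=> nR [HR [npos Hind]].
have [AL Lle Lmin] := loewy_spec nR.
have L0 := loewy_pos nR npos.
move: AL Lle Lmin L0 Hind; set L := loewy R => AL Lle Lmin L0 Hind.
set n := rdim R in npos Lle *.
set A := ract R in AL Lmin *.
have nzL1 : A ^+ L.-1 != 0 by apply: Lmin; rewrite ltn_predL.
have [b [c nzbc]] : exists b c, (A ^+ L.-1) b c != 0.
  case: (pickP (fun bc : 'I_n * 'I_n => (A ^+ L.-1) bc.1 bc.2 != 0)) => [[b c] /= h|none].
    by exists b, c.
  exfalso; move/negP: nzL1; apply; apply/eqP/matrixP => i j; rewrite mxE.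
  by have := none (i, j); move/negbFE/eqP.
pose v0 := rgr R b.
pose gS := fun j : 'I_L => vt v0 j.
pose Io : 'M[k]_(L, n) := \matrix_(j, x) (A ^+ j) b x.
pose Psi : 'M[k]_(n, L) := \matrix_(x, j) (A ^+ (L.-1 - j)) x c.
have powS : forall j x y, \sum_z (A ^+ j) x z * A z y = (A ^+ j.+1) x y.
  by move=> j x y; rewrite exprSr -mulmxE mxE.
have powS' : forall j x y, \sum_z A x z * (A ^+ j) z y = (A ^+ j.+1) x y.
  by move=> j x y; rewrite exprS -mulmxE mxE.
have powD : forall i j x y, \sum_z (A ^+ i) x z * (A ^+ j) z y = (A ^+ (i + j)) x y.
  by move=> i j x y; rewrite exprD -mulmxE mxE.
have Abig : forall j, (L <= j)%N -> A ^+ j = 0.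
  by move=> j le; rewrite -(subnK le) exprD AL mulr0.
have hIo : Sh L *m Io = Io *m A.
  apply/matrixP => j x; rewrite !mxE.
  under eq_bigr do rewrite !mxE.
  under [RHS]eq_bigr do rewrite !mxE.
  rewrite powS sum_delta; case: insubP => [t _ vt|nlt].
    by rewrite (_ : nat_of_ord t = j.+1).
  by rewrite Abig ?mxE // leqNgt.
have hPsi : A *m Psi = Psi *m Sh L.
  apply/matrixP => x j; rewrite !mxE.
  under eq_bigr do rewrite !mxE.
  under [RHS]eq_bigr do rewrite !mxE.
  rewrite powS' sum_delta2; case: j => [[|j] lj] /=.
    by rewrite subn0 prednK // AL mxE.
  case: insubP => [t _ vt|nlt]; last by rewrite ltnW in nlt.
  rewrite (_ : nat_of_ord t = j) // subnSK //; lia.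
have [G defG] : {G : 'M[k]_L | G = Io *m Psi} by exists (Io *m Psi).
have GE : forall i j, G i j = (A ^+ (i + (L.-1 - j))) b c.
  by move=> i j; rewrite defG !mxE; under eq_bigr do rewrite !mxE; rewrite powD.
have Gunit : G \in unitmx.
  rewrite unitmxE unitfE -det_tr det_trig; last first.
    apply/is_trig_mxP => i j lt; rewrite mxE GE Abig ?mxE //.
    have := ltn_ord i; lia.
  rewrite (eq_bigr (fun _ => (A ^+ L.-1) b c)); last first.
    move=> i _; rewrite mxE GE subnKC //; have := ltn_ord i; lia.
  by rewrite prodr_const expf_neq0.
have gIo : grok gS (rgr R) id Io.
  move=> j x; rewrite mxE => /(rep_pow HR) ->; done.
have gPsi : grok (rgr R) gS id Psi.
  move=> x j; rewrite mxE => /(rep_pow HR) h1.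
  have h2 := rep_pow HR nzbc.
  apply: (@iter_ordS_inj (L.-1 - j)); rewrite -h1 h2 /gS /vt -iterD.
  rewrite subnK //; have := ltn_ord j; lia.
have gG : grok gS gS id G by rewrite defG; apply: (grok_ext _ (grok_mul gIo gPsi)).
have GGi : G *m invmx G = 1%:M by rewrite mulmxV.
have GiG : invmx G *m G = 1%:M by rewrite mulVmx.
have gGi : grok gS gS id (invmx G) := grok_inv gG GGi GiG.
have ShG : Sh L *m G = G *m Sh L by rewrite defG mulmxA hIo -!mulmxA hPsi.
have ShGi : Sh L *m invmx G = invmx G *m Sh L.
  rewrite -[LHS]mul1mx -GiG -!mulmxA (mulmxA G) -ShG -!mulmxA GGi mulmx1.
  done.
have [Psi' defPsi'] : {P : 'M[k]_(n, L) | P = Psi *m invmx G} by eexists.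
have IoPsi' : Io *m Psi' = 1%:M by rewrite defPsi' mulmxA -defG GGi.
have gPsi' : grok (rgr R) gS id Psi'.
  by rewrite defPsi'; apply: (grok_ext _ (grok_mul gPsi gGi)).
have hPsi' : A *m Psi' = Psi' *m Sh L.
  by rewrite defPsi' mulmxA hPsi -!mulmxA ShGi.
have [e defe] : {e : 'M[k]_n | e = Psi' *m Io} by eexists.
have [q defq] : {q : 'M[k]_n | q = 1%:M - e} by eexists.
have ge : grok (rgr R) (rgr R) id e.
  by rewrite defe; apply: (grok_ext _ (grok_mul gPsi' gIo)).
have gq : grok (rgr R) (rgr R) id q.
  by rewrite defq; apply: grok_add; [exact: grok1 | exact: grok_opp].
have ee : e *m e = e by rewrite defe mulmxA -(mulmxA Psi') IoPsi' mulmx1.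
have qA : q *m A = A *m q.
  rewrite defq mulmxBl mulmxBr mul1mx mulmx1 defe -mulmxA -hIo mulmxA -hPsi'.
  by rewrite -mulmxA.
have ioq : Io *m q = 0 by rewrite defq mulmxBr mulmx1 defe mulmxA IoPsi' mul1mx subrr.
have qpsi : q *m Psi' = 0 by rewrite defq mulmxBl mul1mx defe -mulmxA IoPsi' mulmx1 subrr.
have eq0 : e *m q = 0 by rewrite defq mulmxBr mulmx1 ee subrr.
have qq : q *m q = q by rewrite {1}defq mulmxBl mul1mx eq0 subr0.
suff q0 : q = 0.
  have e1 : e = 1%:M.
    by move: q0; rewrite defq => /eqP; rewrite subr_eq0 => /eqP <-.
  exists v0, Psi', Io; split => //; try by split.
  by rewrite -defe.
pose r := \rank q.
pose f := maxrankfun q.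
have [Bw defBw] : {B : 'M[k]_(r, n) | B = rowsub f q} by eexists.
have fB : row_free Bw by rewrite defBw; exact: maxrowsub_free.
have eqB : (Bw :=: q)%MS by rewrite defBw; exact: eq_maxrowsub.
pose gW := fun i : 'I_r => rgr R (f i).
have gB : grok gW (rgr R) id Bw by rewrite defBw => i j; rewrite mxE => /gq.
have qB : (q <= Bw)%MS by rewrite eqB.
have BA_sub : (Bw *m A <= Bw)%MS.
  rewrite defBw mul_rowsub_mx qA rowsubE -defBw eqB.
  by apply: submx_trans (submxMl _ _) (submxMl _ _).
have [Pb defPb] : {P : 'M[k]_(n, r) | P = pinvmx Bw} by eexists.
have PbK : forall m (Y : 'M[k]_(m, n)), (Y <= Bw)%MS -> Y *m Pb *m Bw = Y.
  by move=> m Y YB; rewrite defPb mulmxKpV.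
have BPb : Bw *m Pb = 1%:M by rewrite defPb mulmxVp.
have [Cw defCw] : {C : 'M[k]_r | C = Bw *m A *m Pb} by eexists.
have CwB : Cw *m Bw = Bw *m A by rewrite defCw PbK.
have gBA : grok gW (rgr R) (@ordS l.+1) (Bw *m A).
  by apply: (grok_ext _ (grok_mul gB (rep_grok HR))).
have gCw : grok gW gW (@ordS l.+1) Cw.
  by rewrite defCw defPb; exact: (grok_coord (@ordS_inj _) fB gB gBA BA_sub).
pose W := @Rep k l r gW Cw.
have HW : is_rep W := gCw.
have [Q' defQ'] : {Q : 'M[k]_(n, r) | Q = q *m Pb} by eexists.
have gQ' : grok (rgr R) gW id Q'.
  by rewrite defQ' defPb; exact: (grok_coord (@inj_id _) fB gB gq qB).
have Hiso : riso R (dsum (str v0 L) W).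
  exists (row_mx Psi' Q'), (col_mx Io Bw); split.
  - split; first exact: (grok_row gPsi' gQ').
    rewrite /= mul_mx_row mul_row_block !mulmx0 !addr0 !add0r -hPsi'.
    congr row_mx.
    by rewrite defQ' defCw !mulmxA (PbK _ _ qB) qA.
  - split; first exact: (grok_col gIo gB).
    by rewrite /= mul_block_col !mul0mx !addr0 !add0r mul_col_mx hIo CwB.
  - rewrite mul_row_col defQ' (PbK _ _ qB) -defe defq.
    by rewrite addrC subrK.
  - rewrite mul_col_row IoPsi' defQ' mulmxA ioq mul0mx.
    rewrite defBw mul_rowsub_mx qpsi (rowsubE f (0 : 'M[k]_(n, L))) mulmx0.
    rewrite mulmxA mul_rowsub_mx qq -defBw BPb.
    by rewrite -scalar_mx_block.
have [|] := Hind (str v0 L) W (@str_rep k l v0 L) HW Hiso.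
  by move=> /= L00; rewrite L00 in L0.
by move=> /= /eqP; rewrite mxrank_eq0 => /eqP.
Qed.

End Core.


Section Inv.
Variables (k : fieldType) (l : nat).
Local Notation V := 'I_l.+1.
Implicit Types R S T : rep k l.

Definition SR (s : seq (V * nat)) : rep k l :=
  bigdsum (map (fun x => str x.1 x.2) s).

Lemma SR_cons x s : SR (x :: s) = dsum (str x.1 x.2) (SR s).
Proof. by []. Qed.

Lemma strs_of (rs : seq (rep k l)) :
  (forall r, List.In r rs -> indecomposable r /\ nilpotent_rep r) ->
  exists s : seq (V * nat),
    [/\ riso (bigdsum rs) (SR s), map snd s = map (@loewy k l) rs &
        all (fun x => 0 < x.2)%N s].
Proof.
elim: rs => [|r rs IH] H.
  by exists [::]; split => //; exact: riso_refl.
have [Hr nr] := H r (or_introl erefl).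
have [v0 Hv] := indec_str nr Hr.
have [s [Hs Hm Hp]] := IH (fun r' h => H r' (or_intror h)).
exists ((v0, loewy r) :: s); split => /=.
- by rewrite SR_cons; exact: riso_dsum.
- by rewrite Hm.
- rewrite Hp andbT; apply: loewy_pos nr _; by case: Hr => _ [].
Qed.

Lemma mu_strs R p : nilpotent_rep R -> mu_of R p ->
  exists s : seq (V * nat),
    [/\ riso R (SR s), p = sort geq (map snd s) & all (fun x => 0 < x.2)%N s].
Proof.
move=> nR [rs [Hin Hiso ->]].
have nB := nilp_riso Hiso nR.
have [s [Hs Hm Hp]] : exists s : seq (V * nat),
    [/\ riso (bigdsum rs) (SR s), map snd s = map (@loewy k l) rs &
        all (fun x => 0 < x.2)%N s].
  apply: strs_of => r h; split; first exact: Hin.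
  exact: nilp_bigdsum nB r h.
by exists s; split => //; [exact: riso_trans Hiso Hs | rewrite Hm].
Qed.

Lemma grk_zero P m : grk (@zero_rep k l) P m = 0%N.
Proof. by apply/eqP; rewrite -leqn0 /grk rank_leq_row. Qed.

Lemma grk_SR s P m :
  grk (SR s) P m = \sum_(x <- s) count (fun j => P (vt x.1 j)) (iota 0 (x.2 - m)).
Proof.
elim: s => [|x s IH]; first by rewrite big_nil grk_zero.
by rewrite SR_cons grk_dsum IH big_cons grk_str.
Qed.

Lemma grk_SR_T s m :
  grk (SR s) predT m = \sum_(x <- map snd s) (x - m)%N.
Proof.
rewrite grk_SR big_map; apply: eq_bigr => x _.
by rewrite count_predT size_iota.
Qed.

Lemma ses_grk (N X M : rep k l) P m : ses N X M ->
  (grk M P m + grk N P m <= grk X P m)%N.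
Proof.
case=> i [p [hi hp fi fp /andP[ik _]]].
set S := Prp P (rgr X) *m ract X ^+ m.
have Sp : S *m p = p *m (Prp P (rgr M) *m ract M ^+ m).
  by rewrite /S -mulmxA (comm_pow _ hp.2) mulmxA (rhom_Prp P hp) mulmxA.
have rSp : \rank (S *m p) = grk M P m.
  rewrite Sp /grk; apply/eqP; rewrite eqn_leq mxrankM_maxr /=.
  case/row_fullP: fp => B Bp.
  by rewrite -{1}[Prp _ _ *m _]mul1mx -Bp -mulmxA mxrankM_maxr.
have ip : i *m p = 0 by apply/sub_kermxP.
set T := i *m S.
have rT : \rank T = grk N P m.
  rewrite /T /S mulmxA -(rhom_Prp P hi) -mulmxA -(comm_pow _ hi.2) mulmxA.
  by rewrite mxrankMfree.
have TS : (T <= S :&: kermx p)%MS.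
  rewrite sub_capmx submxMl /=; apply/sub_kermxP.
  by rewrite /T -mulmxA Sp mulmxA ip mul0mx.
rewrite -rSp -rT (_ : grk X P m = \rank S) // -(mxrank_mul_ker S p) leq_add2l.
exact: mxrankS.
Qed.

Lemma ses_nilp (N X M : rep k l) : ses N X M -> nilpotent_rep M -> nilpotent_rep N ->
  nilpotent_rep X.
Proof.
case=> i [p [hi hp fi fp /andP[_ ki]]] [a Ha] [b Hb].
exists (a + b)%N.
have : (ract X ^+ a <= i)%MS.
  apply: submx_trans ki; apply/sub_kermxP.
  by rewrite (comm_pow _ hp.2) Ha mulmx0.
case/submxP => Z HZ.
by rewrite exprD -mulmxE HZ -mulmxA -(comm_pow _ hi.2) Hb mul0mx mulmx0.
Qed.

Lemma Prp_mul n P Q (g : 'I_n -> V) :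
  Prp P g *m Prp Q g = Prp [pred x | P x && Q x] g :> 'M[k]_n.
Proof.
apply/matrixP => i j; rewrite mul_diag_mx !mxE.
rewrite /=; case: (P (g i)) => /=; case: (Q (g i)) => /=; by rewrite ?mul1r ?mul0r ?mul0rn.
Qed.

Lemma Prp_add n v (g : 'I_n -> V) :
  Prp (pred1 v) g + Prp (predC1 v) g = 1%:M :> 'M[k]_n.
Proof.
apply/matrixP => i j; rewrite !mxE /=.
rewrite /=; case: (g i == v) => /=; by rewrite ?mul0rn ?addr0 ?add0r.
Qed.

Lemma Prp_T n (g : 'I_n -> V) : Prp predT g = 1%:M :> 'M[k]_n.
Proof. by apply/matrixP => i j; rewrite !mxE. Qed.

Lemma grk_split R v m : is_rep R ->
  (grk R (pred1 v) m + grk R (predC1 v) m)%N = grk R predT m.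
Proof.
move=> HR; have G := rep_pow (m := m) HR.
set sg := iter m (@ordS l.+1).
have sgi : injective sg := @iter_ordS_inj l m.
set Y := ract R ^+ m; set g := rgr R.
set Y1 := Prp (pred1 v) g *m Y; set Y2 := Prp (predC1 v) g *m Y.
have E1 : Y1 = Y *m Prp (pred1 (sg v)) g.
  by apply: grok_Prp G _ => d /=; rewrite (inj_eq sgi).
have E2 : Y2 = Y *m Prp (predC1 (sg v)) g.
  by apply: grok_Prp G _ => d /=; rewrite (inj_eq sgi).
have disj : Prp (pred1 (sg v)) g *m Prp (predC1 (sg v)) g = 0 :> 'M[k]_(rdim R).
  rewrite Prp_mul; apply/matrixP => i j; rewrite !mxE /=.
  by case: eqP => /=; rewrite ?mul0rn // => ->; rewrite eqxx /= mul0rn.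
have disj' : Prp (pred1 v) g *m Prp (predC1 v) g = 0 :> 'M[k]_(rdim R).
  rewrite Prp_mul; apply/matrixP => i j; rewrite !mxE /=.
  by case: eqP => /=; rewrite ?mul0rn // => ->; rewrite eqxx /= mul0rn.
have disj2 : Prp (predC1 v) g *m Prp (pred1 v) g = 0 :> 'M[k]_(rdim R).
  rewrite Prp_mul; apply/matrixP => i j; rewrite !mxE /=.
  by case: eqP => /=; rewrite ?mul0rn ?andbF //= mul0rn.
have idem : forall P, Prp P g *m Prp P g = Prp P g :> 'M[k]_(rdim R).
  by move=> P; rewrite Prp_mul; apply/matrixP => i j; rewrite !mxE /= andbb.
have sumY : Y1 + Y2 = Prp predT g *m Y by rewrite -mulmxDl Prp_add Prp_T.
rewrite /grk -/g -/Y -/Y1 -/Y2 -sumY.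
have eqS : ((Y1 + Y2)%R :=: Y1 + Y2)%MS.
  apply/eqmxP/andP; split; first exact: addmx_sub_adds.
  rewrite addsmx_sub; apply/andP; split.
    have H1 : Y1 = Prp (pred1 v) g *m (Y1 + Y2).
      by rewrite mulmxDr /Y1 /Y2 !mulmxA idem disj' mul0mx addr0.
    rewrite {1}H1; exact: submxMl.
  have H2 : Y2 = Prp (predC1 v) g *m (Y1 + Y2).
    by rewrite mulmxDr /Y1 /Y2 !mulmxA idem disj2 mul0mx add0r.
  rewrite {1}H2; exact: submxMl.
rewrite eqS mxrank_disjoint_sum //.
apply/eqP; rewrite -submx0.
set Z := (Y1 :&: Y2)%MS.
have [W1 HW1] : exists W, Z = W *m Y1 by apply/submxP; exact: capmxSl.
have [W2 HW2] : exists W, Z = W *m Y2 by apply/submxP; exact: capmxSr.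
have Z1 : Z = Z *m Prp (pred1 (sg v)) g by rewrite HW1 E1 -!mulmxA idem.
have Z2 : Z = Z *m Prp (predC1 (sg v)) g by rewrite HW2 E2 -!mulmxA idem.
by rewrite Z2 Z1 -mulmxA disj mulmx0 sub0mx.
Qed.

End Inv.
Arguments SR {k l}.

Local Close Scope ring_scope.

Definition fsum (p : seq nat) m := \sum_(x <- p) (x - m).

Lemma fsum_cons a p m : fsum (a :: p) m = (a - m) + fsum p m.
Proof. by rewrite /fsum big_cons. Qed.

Lemma fsum_le0 a p : all (fun x => x <= a) p -> fsum p a = 0.
Proof.
move=> /allP H; rewrite /fsum big_seq big1 // => x /H.
by rewrite -subn_eq0 => /eqP.
Qed.

Lemma sorted_geq_all a p : sorted geq (a :: p) -> all (fun x => x <= a) p.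
Proof.
move=> /= H; have tr : transitive geq by move=> x y z h1 h2; exact: leq_trans h2 h1.
exact: (order_path_min tr H).
Qed.

Lemma part_lt_cons a p q : part_lt p q -> part_lt (a :: p) (a :: q).
Proof.
case=> ne [i [Hj Hi]]; split; first by case=> E; apply: ne.
exists i.+1; split => // [[|j]] //= lt; exact: Hj.
Qed.

Lemma part_le_of (p q : seq nat) : sorted geq p -> sorted geq q ->
  all (fun x => 0 < x) p -> all (fun x => 0 < x) q ->
  (forall m, fsum q m <= fsum p m) -> part_le p q.
Proof.
elim: p q => [|a p IH] [|b q] //= sp sq pp pq H.
- by left.
- exfalso; have := H 0; rewrite fsum_cons /fsum big_nil subn0.
  by case/andP: pq => b0 _; rewrite leqn0 addn_eq0 => /andP[/eqP b00]; rewrite b00 in b0.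
- right; split => //; exists 0; split => //=; by case/andP: pp.
- case: (ltngtP a b) => [ab|ba|ab].
  + exfalso; have := H a.
    rewrite !fsum_cons subnn add0n (fsum_le0 (sorted_geq_all sp)).
    by rewrite leqn0 addn_eq0 subn_eq0 leqNgt ab.
  + right; split; first by case=> e; rewrite e ltnn in ba.
    by exists 0; split.
  + subst b.
    have sp' : sorted geq p by apply: path_sorted sp.
    have sq' : sorted geq q by apply: path_sorted sq.
    case/andP: pp => _ pp; case/andP: pq => _ pq.
    have H' : forall m, fsum q m <= fsum p m.
      by move=> m; have := H m; rewrite !fsum_cons leq_add2l.
    case: (IH q sp' sq' pp pq H') => [->|lt]; first by left.
    by right; apply: part_lt_cons.
Qed.

Lemma part_eq_of (p q : seq nat) : sorted geq p -> sorted geq q ->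
  all (fun x => 0 < x) p -> all (fun x => 0 < x) q ->
  (forall m, fsum q m = fsum p m) -> p = q.
Proof.
move=> sp sq pp pq H.
have [//|[_ [i [Hi1 Hi2]]]] := part_le_of sp sq pp pq (fun m => eq_leq (H m)).
have [//|[_ [j [Hj1 Hj2]]]] := part_le_of sq sp pq pp (fun m => eq_leq (esym (H m))).
exfalso; case: (ltngtP i j) => [ij|ji|e].
- by rewrite (Hj1 _ ij) ltnn in Hi2.
- by rewrite (Hi1 _ ji) ltnn in Hj2.
- by subst j; have := ltn_trans Hi2 Hj2; rewrite ltnn.
Qed.

Section Count.
Variable l : nat.
Local Notation V := 'I_l.+1.

Definition cnt (x : V * nat) (w : V) (m : nat) :=
  count (fun j => vt x.1 j == w) (iota 0 (x.2 - m)).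

Lemma count_iotaS (a : pred nat) n :
  count a (iota 0 n.+1) = count a (iota 0 n) + a n.
Proof. by rewrite -addn1 iotaD count_cat /= add0n addn0. Qed.

Lemma vtS_eq (v0 w : V) a : (vt v0 a.+1 == w) = (vt v0 a == ord_pred w).
Proof.
rewrite /vt /=; apply/eqP/eqP => [<-|->]; first by rewrite ordSK.
by rewrite ord_predK.
Qed.

Lemma cnt_id (x : V * nat) v m :
  cnt x v m + cnt x (ord_pred v) m.+2 =
  cnt x v m.+1 + cnt x (ord_pred v) m.+1 + (x == (v, m.+1)).
Proof.
case: x => v0 n; rewrite /cnt /=.
case: (leqP n m) => [le|lt].
  have z0 : n - m = 0 by apply/eqP; rewrite subn_eq0.
  have z1 : n - m.+1 = 0 by apply/eqP; rewrite subn_eq0 (leq_trans le).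
  have z2 : n - m.+2 = 0 by apply/eqP; rewrite subn_eq0 (leq_trans le) // ltnW.
  rewrite z0 z1 z2 /= xpair_eqE (_ : (n == m.+1) = false) ?andbF //.
  by apply/negbTE; rewrite neq_ltn ltnS le.
case: (eqVneq n m.+1) => [->|ne].
  rewrite subSnn !subnn /= xpair_eqE eqxx andbT.
  have -> : m.+1 - m.+2 = 0 by apply/eqP; rewrite subn_eq0.
  by rewrite /= !addn0 add0n.
have e2 : n - m = (n - m.+2).+2 by lia.
have e1 : n - m.+1 = (n - m.+2).+1 by lia.
rewrite e2 e1; set a := n - m.+2.
rewrite xpair_eqE (negbTE ne) andbF addn0.
rewrite !count_iotaS vtS_eq.
by rewrite -!addnA; congr (_ + (_ + _)); rewrite addnC.
Qed.

Lemma arith5 a A b B c C d D e E : a + b = c + d + e -> A + B = C + D + E ->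
  a + A + (b + B) = c + C + (d + D) + (e + E).
Proof. lia. Qed.

Definition Fv (s : seq (V * nat)) v m := \sum_(x <- s) cnt x v m.

Lemma Fv_id s v m :
  Fv s v m + Fv s (ord_pred v) m.+2 =
  Fv s v m.+1 + Fv s (ord_pred v) m.+1 + count_mem (v, m.+1) s.
Proof.
elim: s => [|x s IH]; first by rewrite /Fv !big_nil.
rewrite /Fv !big_cons /= -/(Fv s v m) -/(Fv s _ _) -/(Fv s _ _) -/(Fv s _ _).
have := cnt_id x v m; rewrite eq_sym => H.
exact: arith5 H IH.
Qed.

Lemma Fv_perm (s t : seq (V * nat)) :
  all (fun x => 0 < x.2) s -> all (fun x => 0 < x.2) t ->
  (forall v m, Fv s v m = Fv t v m) -> perm_eq s t.
Proof.
move=> ps pt H; rewrite /perm_eq; apply/allP => [[v [|m]]] _ /=; apply/eqP.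
  rewrite !(@eq_in_count _ _ pred0) ?count_pred0 // => y.
    move/(allP pt); case: y => w n /= pos.
    by rewrite xpair_eqE (_ : (n == 0) = false) ?andbF // eqn0Ngt pos.
  move/(allP ps); case: y => w n /= pos.
  by rewrite xpair_eqE (_ : (n == 0) = false) ?andbF // eqn0Ngt pos.
have := Fv_id s v m; have := Fv_id t v m; rewrite !H.
by move=> -> /eqP; rewrite eqn_add2l => /eqP ->.
Qed.

End Count.

Lemma fsum_sort (s : seq nat) m : fsum (sort geq s) m = fsum s m.
Proof.
by apply: perm_big; rewrite perm_sort.
Qed.

Lemma fsum_cat (p q : seq nat) m : fsum (p ++ q) m = fsum p m + fsum q m.
Proof. by rewrite /fsum big_cat. Qed.

Lemma geq_total : total geq.
Proof. by move=> x y; exact: leq_total y x. Qed.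

Theorem lemma4p4 (k : fieldType) (l : nat) (M N X : rep k l) :
  is_rep M -> is_rep N -> is_rep X ->
  nilpotent_rep M -> nilpotent_rep N ->
  ses N X M ->
  forall pM pN pX : seq nat,
    mu_of M pM -> mu_of N pN -> mu_of X pX ->
    part_le pX (part_union pM pN) /\
    (pX = part_union pM pN <-> riso X (dsum M N)).
Proof.
move=> HM HN HX nM nN hses pM pN pX muM muN muX.
have nX := ses_nilp hses nM nN.
have [sM [iM eM posM]] := mu_strs nM muM.
have [sN [iN eN posN]] := mu_strs nN muN.
have [sX [iX eX posX]] := mu_strs nX muX.
have fR : forall (R : rep k l) s p, riso R (SR s) -> p = sort geq (map snd s) ->
    forall m, grk R predT m = fsum p m.
  by move=> R s p iso -> m; rewrite (riso_grk _ _ iso) grk_SR_T fsum_sort.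
have fM := fR _ _ _ iM eM; have fN := fR _ _ _ iN eN; have fX := fR _ _ _ iX eX.
have posS : forall s : seq ('I_l.+1 * nat), all (fun x => 0 < x.2) s ->
    all (fun x => 0 < x) (sort geq (map snd s)).
  by move=> s ps; rewrite all_sort all_map.
have sortS : forall s : seq nat, sorted geq (sort geq s).
  by move=> s; exact: (sort_sorted geq_total s).
have pU : all (fun x => 0 < x) (part_union pM pN).
  by rewrite /part_union all_sort all_cat eM eN !posS.
have fU : forall m, fsum (part_union pM pN) m = fsum pM m + fsum pN m.
  by move=> m; rewrite /part_union fsum_sort fsum_cat.
have srX : sorted geq pX by rewrite eX.
have pXp : all (fun x => 0 < x) pX by rewrite eX posS.
split.
  apply: part_le_of => //; first exact: sortS.
  move=> m; rewrite fU -fM -fN -fX; exact: ses_grk.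
split.
- move=> E.
  have T : forall m, grk X predT m = grk M predT m + grk N predT m.
    by move=> m; rewrite fX fM fN E fU.
  have G1 : forall v m, grk X (pred1 v) m = grk M (pred1 v) m + grk N (pred1 v) m.
    move=> v m.
    have a1 := ses_grk (pred1 v) m hses; have a2 := ses_grk (predC1 v) m hses.
    have s1 := grk_split v m HX; have s2 := grk_split v m HM.
    have s3 := grk_split v m HN; have t := T m.
    lia.
  have FS : forall (R : rep k l) s v m, riso R (SR s) -> grk R (pred1 v) m = Fv s v m.
    by move=> R s v m iso; rewrite (riso_grk _ _ iso) grk_SR.
  have Feq : forall v m, Fv sX v m = Fv (sM ++ sN) v m.
    move=> v m; rewrite -(FS _ _ _ _ iX) G1 (FS _ _ _ _ iM) (FS _ _ _ _ iN).
    by rewrite /Fv big_cat.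
  have pMN : all (fun x => 0 < x.2) (sM ++ sN) by rewrite all_cat posM posN.
  have pe := Fv_perm posX pMN Feq.
  apply: riso_trans iX _.
  apply: riso_trans (bigdsum_perm (fun x => str x.1 x.2) pe) _.
  rewrite map_cat; apply: riso_trans (bigdsum_cat _ _) _.
  exact: riso_dsum (riso_sym iM) (riso_sym iN).
- move=> iso; apply: part_eq_of => //; first exact: sortS.
  move=> m; rewrite fU -fM -fN -fX (riso_grk _ _ iso) grk_dsum //.
Qed.
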